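(* Let $\gamma$ be a functorial with $\gamma(G)>1$ for every finite group $G\ne1$, satisfying (F1) and (F2). (1) If $G=A_1\times\dots\times A_n$ is the direct product of its normal subgroups $A_i$, then $h_\gamma(G)=\max\{h_\gamma(A_i)\mid 1\le i\le n\}$. (2) If $G=\langle A_i\mid 1\le i\le n\rangle$ is the join of its subnormal subgroups $A_i$, then $h_\gamma(G)\le\max\{h_\gamma(A_i)\mid 1\le i\le n\}$; if moreover $\gamma$ satisfies (F5), then $h_\gamma(G)=\max\{h_\gamma(A_i)\mid 1\le i\le n\}$.
   Context: All groups are finite. A functorial is a function $\theta$ assigning to each group $G$ a characteristic subgroup $\theta(G)$ such that $f(\theta(G))=\theta(f(G))$ for every isomorphism $f$. Conditions (for every group $G$): (F1) $f(\gamma(G))\subseteq\gamma(f(G))$ for every epimorphism $f:G\to G^*$; (F2) $\gamma(N)\subseteq\gamma(G)$ for every $N\trianglelefteq G$; (F5) $\gamma(G)\cap N\subseteq\gamma(N)$ for every $N\trianglelefteq G$. The $\gamma$-series is $\gamma_{(0)}(G)=1$ and $\gamma_{(i+1)}(G)$ the full preimage of $\gamma(G/\gamma_{(i)}(G))$; $h_\gamma(G)$ is the least $h$ with $\gamma_{(h)}(G)=G$. *)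

(* Defs.v *)
From mathcomp Require Import all_boot all_fingroup all_solvable.
Set Implicit Arguments. Unset Strict Implicit. Unset Printing Implicit Defensive.
Import GroupScope.
Local Open Scope group_scope.

Definition gfun := forall gT : finGroupType, {group gT} -> {group gT}.

Definition functorial (gamma : gfun) : Prop :=
  (forall (gT : finGroupType) (G : {group gT}), gamma gT G \char G) /\
  (forall (gT rT : finGroupType) (G : {group gT}) (f : {morphism G >-> rT}),
      'injm f -> f @* (gamma gT G) = gamma rT (f @* G)%G).

Definition gamma_nontriv (gamma : gfun) : Prop :=
  forall (gT : finGroupType) (G : {group gT}), G :!=: 1 -> gamma gT G :!=: 1.

Definition condF1 (gamma : gfun) : Prop :=
  forall (gT rT : finGroupType) (G : {group gT}) (f : {morphism G >-> rT}),
    f @* (gamma gT G) \subset gamma rT (f @* G)%G.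

Definition condF2 (gamma : gfun) : Prop :=
  forall (gT : finGroupType) (G N : {group gT}), N <| G ->
    gamma gT N \subset gamma gT G.

Definition condF5 (gamma : gfun) : Prop :=
  forall (gT : finGroupType) (G N : {group gT}), N <| G ->
    gamma gT G :&: N \subset gamma gT N.

Fixpoint gseries (gamma : gfun) (gT : finGroupType) (G : {group gT}) (i : nat)
  : {group gT} :=
  match i with
  | 0 => 1%G
  | i'.+1 =>
      let H := gseries gamma G i' in
      (coset H @*^-1 gamma _ (G / H)%G)%G
  end.

(* Under the standing hypotheses
   (gamma(X) > 1 for X <> 1) the series strictly increases until it reaches G,
   so such an h exists and is at most #|G|; we search in [0, #|G|]. *)
Definition hgamma (gamma : gfun) (gT : finGroupType) (G : {group gT}) : nat :=
  find (fun h => gseries gamma G h == G) (iota 0 #|G|.+1).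

(* Main.v *)
Require Import Defs.
From mathcomp Require Import all_boot all_fingroup all_solvable.
Import GroupScope.


Section Helpers.
Set Implicit Arguments. Unset Strict Implicit. Unset Printing Implicit Defensive.
Local Open Scope group_scope.

Definition Hchar (gamma : gfun) := forall (gT : finGroupType) (G : {group gT}), gamma gT G \char G.

Lemma gseries_normal gamma (Hc : Hchar gamma) gT (G : {group gT}) i :
  gseries gamma G i <| G.
Proof.
elim: i => [|i IH] /=; first exact: normal1.
rewrite -[X in _ <| X](quotientGK IH) cosetpre_normal.
exact: char_normal (Hc _ _).
Qed.

Lemma gseries_sub gamma (Hc : Hchar gamma) gT (G : {group gT}) i :
  gseries gamma G i \subset G.
Proof. exact: normal_sub (gseries_normal Hc G i). Qed.

Lemma gseries_subS gamma gT (G : {group gT}) i :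
  gseries gamma G i \subset gseries gamma G i.+1.
Proof. exact: sub_cosetpre. Qed.

Lemma gseries_mono gamma gT (G : {group gT}) i j : i <= j ->
  gseries gamma G i \subset gseries gamma G j.
Proof.
move/subnK <-; elim: (j - i) => [|k IH]; first by rewrite add0n.
exact: subset_trans IH (gseries_subS _ _ _).
Qed.

Lemma gseries_proper gamma (Hc : Hchar gamma) (Hn : gamma_nontriv gamma)
  gT (G : {group gT}) i :
  gseries gamma G i \proper G -> gseries gamma G i \proper gseries gamma G i.+1.
Proof.
move=> pr; set K := gseries gamma G i.
have nsKG : K <| G by apply: gseries_normal.
have -> : (K : {set gT}) = coset K @*^-1 1.
  by rewrite -kerE ker_coset.
rewrite /= cosetpre_proper proper1G Hn //.
apply/negP => /eqP E.
have : (G / K)%G \subset 1%G by rewrite /K E.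
by rewrite quotient_sub1 ?normal_norm // => sGK; move: pr; rewrite properE sGK andbF.
Qed.

Lemma gseries_fix gamma (Hc : Hchar gamma) gT (G : {group gT}) i :
  gseries gamma G i = G -> gseries gamma G i.+1 = G.
Proof.
move=> E; apply/group_inj/eqP; rewrite eqEsubset gseries_sub //.
by rewrite -{1}E gseries_subS.
Qed.

Lemma gseries_card gamma (Hc : Hchar gamma) (Hn : gamma_nontriv gamma)
  gT (G : {group gT}) m :
  gseries gamma G m = G \/ m < #|gseries gamma G m|.
Proof.
elim: m => [|m [E|lt]]; first by right; rewrite /= cards1.
  by left; apply: gseries_fix.
case: (eqVneq (gseries gamma G m) G) => [E|ne]; first by left; apply: gseries_fix.
right; apply: leq_ltn_trans lt (proper_card (gseries_proper Hc Hn _)).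
by rewrite properEneq ne gseries_sub.
Qed.

Lemma gseries_top gamma (Hc : Hchar gamma) (Hn : gamma_nontriv gamma)
  gT (G : {group gT}) : gseries gamma G #|G| = G.
Proof.
case: (gseries_card Hc Hn G #|G|) => // lt.
by have := subset_leq_card (gseries_sub Hc G #|G|); rewrite leqNgt lt.
Qed.

Lemma hgP gamma (Hc : Hchar gamma) (Hn : gamma_nontriv gamma)
  gT (G : {group gT}) m :
  (hgamma gamma G <= m) = (gseries gamma G m == G).
Proof.
rewrite /hgamma; set p := (fun h => gseries gamma G h == G).
have hs : has p (iota 0 #|G|.+1).
  apply/hasP; exists #|G|; first by rewrite mem_iota add0n ltnSn.
  by rewrite /p /= gseries_top.
have lt := hs; rewrite has_find size_iota in lt.
have ph := nth_find 0 hs; rewrite nth_iota // add0n in ph.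
apply/idP/idP => [le|E].
  apply/eqP; apply/group_inj/eqP; rewrite eqEsubset gseries_sub //.
  rewrite -{1}(eqP ph); exact: gseries_mono.
rewrite leqNgt; apply/negP => ltm.
have := before_find 0 ltm; rewrite nth_iota ?add0n ?(ltn_trans ltm) //.
by rewrite /p E.
Qed.
Lemma step gamma (HF1 : condF1 gamma) (gT rT : finGroupType) (D G K : {group gT})
  (f : {morphism D >-> rT}) (K' M : {group rT}) :
  G \subset D -> G \subset 'N(K) -> f @* G = M -> M \subset 'N(K') ->
  f @* (G :&: K) \subset K' ->
  forall x, x \in G -> coset K x \in gamma _ (G / K)%G ->
  coset K' (f x) \in gamma _ (M / K')%G.
Proof.
move=> sGD nKG fGM nK'M sfK x Gx gx.
have domP : G \subset 'dom (coset K' \o f).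
  by rewrite -sub_morphim_pre // fGM.
pose fq := restrm domP (coset K' \o f).
pose q := restrm nKG (coset K).
have sker : 'ker q \subset 'ker fq.
  rewrite !ker_restrm ker_comp.
  by rewrite /= (ker_coset K) (ker_coset K') subsetI subsetIl -sub_morphim_pre // subIset // sGD.
pose g := factm sker (subxx G).
have HF := HF1 _ _ (q @* G)%G g.
have E1 : gamma _ (q @* G)%G = gamma _ (G / K)%G.
  by congr (gamma _ _); apply: group_inj; rewrite /= morphim_restrm setIid.
have E2 : gamma _ (g @* (q @* G))%G = gamma _ (M / K')%G.
  congr (gamma _ _); apply: group_inj.
  by rewrite /= morphim_factm morphim_restrm setIid morphim_comp fGM.
rewrite E1 E2 in HF.
apply: (subsetP HF).
have -> : coset K' (f x) = g (q x) by rewrite /g factmE.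
apply: mem_morphim; first by rewrite mem_morphim.
by [].
Qed.

Lemma seriesA gamma (Hc : Hchar gamma) (HF1 : condF1 gamma) (HF2 : condF2 gamma)
  gT (G N : {group gT}) i : N <| G ->
  gseries gamma N i \subset gseries gamma G i.
Proof.
move=> nsNG; elim: i => [|i IH]; first by rewrite sub1G.
set L := gseries gamma N i; set K := gseries gamma G i.
apply/subsetP => x hx.
have Nx := subsetP (gseries_sub Hc N i.+1) x hx.
move: hx => /= /morphpreP[_ gx].
have nsKG : K <| G by apply: gseries_normal.
have nKN : N \subset 'N(K) := subset_trans (normal_sub nsNG) (normal_norm nsKG).
apply/morphpreP; split; first exact: subsetP nKN x Nx.
apply: (subsetP (HF2 _ _ _ (quotient_normal K nsNG))).
apply: (step HF1 (f := idm_morphism N) (M := N)) gx => //.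
- exact: normal_norm (gseries_normal Hc N i).
- exact: morphim_idm.
- by rewrite morphim_idm ?subsetIl // subIset // IH orbT.
Qed.

Lemma seriesB gamma (Hc : Hchar gamma) (HF1 : condF1 gamma) (HF5 : condF5 gamma)
  gT (G N : {group gT}) i : N <| G ->
  gseries gamma G i :&: N \subset gseries gamma N i.
Proof.
move=> nsNG; elim: i => [|i IH]; first by rewrite subsetIl.
set L := gseries gamma N i; set K := gseries gamma G i.
apply/subsetP => x /setIP[hx Nx].
move: hx => /= /morphpreP[nKx gx].
have nsKG : K <| G by apply: gseries_normal.
have nKN : N \subset 'N(K) := subset_trans (normal_sub nsNG) (normal_norm nsKG).
have nLN : N \subset 'N(L) := normal_norm (gseries_normal Hc N i).
apply/morphpreP; split; first exact: subsetP nLN x Nx.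
have gx' : coset K x \in gamma _ (N / K)%G.
  apply: (subsetP (HF5 _ _ _ (quotient_normal K nsNG))).
  by rewrite inE gx mem_quotient.
apply: (step HF1 (f := idm_morphism N) (M := N)) gx' => //.
- exact: morphim_idm.
- by rewrite morphim_idm ?subsetIl // setIC.
Qed.

Lemma seriesM gamma (Hc : Hchar gamma) (HF1 : condF1 gamma)
  (gT rT : finGroupType) (G : {group gT}) (f : {morphism G >-> rT}) i :
  f @* gseries gamma G i \subset gseries gamma (f @* G)%G i.
Proof.
elim: i => [|i IH]; first by rewrite /= morphim1 sub1G.
set K := gseries gamma G i; set K' := gseries gamma (f @* G)%G i.
apply/subsetP => y /morphimP[x Gx hx ->].
move: hx => /= /morphpreP[nKx gx].
have nsK'M : K' <| (f @* G)%G by apply: gseries_normal.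
apply/morphpreP; split.
  by apply: (subsetP (normal_norm nsK'M)); rewrite mem_morphim.
apply: (step HF1 (f := f) (M := (f @* G)%G)) gx => //.
- exact: normal_norm (gseries_normal Hc G i).
- exact: normal_norm nsK'M.
- by rewrite (setIidPr (gseries_sub Hc G i)).
Qed.

Lemma subnormal_ind gT (R : {group gT} -> {group gT} -> Prop) :
  (forall G, R G G) ->
  (forall H K : {group gT}, H <| K -> R H K) ->
  (forall H K G : {group gT}, R H K -> R K G -> R H G) ->
  forall H G : {group gT}, H <|<| G -> R H G.
Proof.
move=> Rrefl Rn Rtr H G /subnormalP[s Hs <-].
elim: s H Hs => [|K s IH] H /=; first by [].
case/andP => nsHK Ks.
exact: Rtr (Rn _ _ nsHK) (IH K Ks).
Qed.

Theorem theorem8_aux (gamma : gfun) :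
  functorial gamma -> gamma_nontriv gamma -> condF1 gamma -> condF2 gamma ->
  (forall (gT : finGroupType) (n : nat) (G : {group gT})
          (A : 'I_n -> {group gT}),
      \big[dprod/1]_(i < n) A i = G ->
      hgamma gamma G = \max_(i < n) hgamma gamma (A i)) /\
  (forall (gT : finGroupType) (n : nat) (G : {group gT})
          (A : 'I_n -> {group gT}),
      (forall i, A i <|<| G) ->
      G :=: << \bigcup_(i < n) A i >> ->
      (hgamma gamma G <= \max_(i < n) hgamma gamma (A i))%N /\
      (condF5 gamma -> hgamma gamma G = \max_(i < n) hgamma gamma (A i))).
Proof.
move=> [Hc _] Hn HF1 HF2.
have hA gT (H G : {group gT}) i : H <|<| G ->
    gseries gamma H i \subset gseries gamma G i.
  move: H G; apply: (subnormal_ind (R := fun H G =>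
      gseries gamma H i \subset gseries gamma G i)) => //.
  - by move=> H G nsHG; apply: seriesA.
  - by move=> H K G; apply: subset_trans.
have hB (HF5 : condF5 gamma) gT (H G : {group gT}) : H <|<| G ->
    forall i, gseries gamma G i :&: H \subset gseries gamma H i.
  move=> sn; suff: H \subset G /\ forall i,
      gseries gamma G i :&: H \subset gseries gamma H i by case.
  move: H G sn; apply: (subnormal_ind (R := fun H G => H \subset G /\ forall i,
      gseries gamma G i :&: H \subset gseries gamma H i)) => //.
  - by move=> G; split=> // i; apply: subsetIl.
  - by move=> H G nsHG; split; [exact: normal_sub | move=> i; apply: seriesB].
  - move=> H K G [sHK hHK] [sKG hKG]; split; first exact: subset_trans sKG.
    move=> i; apply: subset_trans (hHK i).
    rewrite subsetI subsetIr andbT -(setIidPr sHK) setIA.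
    exact: subset_trans (subsetIl _ _) (hKG i).
have hgE gT (G : {group gT}) m : gseries gamma G m = G -> (hgamma gamma G <= m)%N.
  by move=> E; rewrite (hgP Hc Hn) E.
have hgS gT (G : {group gT}) m : G \subset gseries gamma G m -> (hgamma gamma G <= m)%N.
  move=> sG; apply: hgE; apply: group_inj; apply/eqP.
  by rewrite eqEsubset sG gseries_sub.
have hgT gT (G : {group gT}) : gseries gamma G (hgamma gamma G) = G.
  by apply/eqP; rewrite -(hgP Hc Hn).
have part2 : forall (gT : finGroupType) (n : nat) (G : {group gT})
          (A : 'I_n -> {group gT}),
      (forall i, A i <|<| G) ->
      G :=: << \bigcup_(i < n) A i >> ->
      (hgamma gamma G <= \max_(i < n) hgamma gamma (A i))%N /\
      (condF5 gamma -> hgamma gamma G = \max_(i < n) hgamma gamma (A i)).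
  move=> gT n G A snA defG.
  have le : (hgamma gamma G <= \max_(i < n) hgamma gamma (A i))%N.
    apply: (hgS); rewrite {1}defG gen_subG.
    apply/bigcupsP => i _; apply: subset_trans (hA _ _ _ _ (snA i)).
    have := @leq_bigmax _ (fun i => hgamma gamma (A i)) i.
    by rewrite (hgP Hc Hn) => /eqP ->.
  split=> // HF5; apply/eqP; rewrite eqn_leq le /=.
  apply/bigmax_leqP => i _; apply: (hgS).
  apply: subset_trans (hB HF5 _ _ _ (snA i) _).
  by rewrite hgT subsetI subxx subnormal_sub.
split=> // gT n G A defG.
have nsA i : A i <| G.
  have := defG; rewrite (bigD1 i) //= => /dprod_normal2 [] //.
have [le _] := part2 gT n G A (fun i => normal_subnormal (nsA i))
  (esym (bigdprodWY defG)).
apply/eqP; rewrite eqn_leq le /=.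
apply/bigmax_leqP => i _.
have := defG; rewrite (bigD1 i) //= => defG'.
case/dprodP: (defG') => [[K H eK eH] _ _ _]; rewrite eH in defG'.
have cfHK : trivm H @* H \subset 'C(idm (A i) @* A i).
  by rewrite morphim_trivm sub1G.
pose f := dprodm defG' cfHK.
have Ef2 : f @* G = A i.
  by rewrite /= im_dprodm morphim_trivm morphim_idm // mulg1.
have Ef : (f @* G)%G = A i by apply: group_inj.
have := seriesM Hc HF1 f (hgamma gamma G); rewrite Ef hgT => sub.
by move: sub; rewrite Ef2 => /(hgS _ _ _).
Qed.

End Helpers.

Theorem theorem8 (gamma : gfun) :
  functorial gamma -> gamma_nontriv gamma -> condF1 gamma -> condF2 gamma ->
  (* (1) direct product of normal subgroups *)
  (forall (gT : finGroupType) (n : nat) (G : {group gT})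
          (A : 'I_n -> {group gT}),
      \big[dprod/1]_(i < n) A i = G ->
      hgamma gamma G = \max_(i < n) hgamma gamma (A i)) /\
  (* (2) join of subnormal subgroups *)
  (forall (gT : finGroupType) (n : nat) (G : {group gT})
          (A : 'I_n -> {group gT}),
      (forall i, A i <|<| G) ->
      G :=: << \bigcup_(i < n) A i >> ->
      (hgamma gamma G <= \max_(i < n) hgamma gamma (A i))%N /\
      (condF5 gamma -> hgamma gamma G = \max_(i < n) hgamma gamma (A i))).
Proof. exact: theorem8_aux. Qed.
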